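(* Let $V$ be an $m$-dimensional vector space with volume form $\omega$, and let $(F,G,H)$ be a generic triple of decorated flags. For nonnegative integers $a,b,c,s$ with $a+b+c=m-s$ and $a,b,c>0$, $$\Delta^s_{a,b,c}\,\Delta^{s+1}_{a,b-1,c}=\Delta^s_{a+1,b-1,c}\,\Delta^{s+1}_{a-1,b,c}+\Delta^s_{a,b-1,c+1}\,\Delta^{s+1}_{a,b,c-1}.$$
   Context: A decorated flag in $(V,\omega)$ is a flag $F_1\subset\cdots\subset F_{m-1}$ ($\dim F_i=i$) with nonzero $f_{(i)}\in\wedge^iF_i$ for $1\le i\le m-1$; put $f_{(0)}=1$ and let $f_{(m)}\in\wedge^mV$ with $\langle f_{(m)},\omega\rangle=1$; similarly $G=(G_\bullet,g_{(i)})$, $H=(H_\bullet,h_{(i)})$. For generic $(F,G)$ there is a basis $f_1,\dots,f_m$ of $V$ with $f_k\in F_k\cap G_{m+1-k}$ and $f_{(k)}=f_1\wedge\cdots\wedge f_k$ for all $k$; for generic $(G,H)$ there is a basis $h_1,\dots,h_m$ with $h_k\in G_{m+1-k}\cap H_k$ and $h_{(k)}=h_k\wedge h_{k-1}\wedge\cdots\wedge h_1$. Put $f_{s,(k)}=f_{s+1}\wedge\cdots\wedge f_{s+k}$ and $h_{(k),s}=h_{s+k}\wedge\cdots\wedge h_{s+1}$. For $a+b+c=m-s$, $f_{s,(a)}\wedge g_{(b)}\wedge h_{(c),s}\in\wedge^{m-s}G_{m-s}$ (with $G_m=V$, $g_{(m)}$ normalized by $\langle g_{(m)},\omega\rangle=1$),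 and $\Delta^s_{a,b,c}:=\langle f_{s,(a)}\wedge g_{(b)}\wedge h_{(c),s},\omega_s\rangle$, where $\omega_s$ is the volume form on $G_{m-s}$ with $\langle g_{(m-s)},\omega_s\rangle=\langle f_{(s)}\wedge g_{(m-s)},\omega\rangle\langle g_{(m-s)}\wedge h_{(s)},\omega\rangle$. For $s=0$, $\Delta^0_{a,b,c}=\Delta_{a,b,c}:=\langle f_{(a)}\wedge g_{(b)}\wedge h_{(c)},\omega\rangle$. *)

(* Defs.v *)
From HB Require Import structures.
From mathcomp Require Import all_boot all_order all_algebra.
Set Implicit Arguments. Unset Strict Implicit. Unset Printing Implicit Defensive.
Import GRing.Theory.
Local Open Scope ring_scope.

(* Model: V = 'rV[K]_m (row vectors), volume form  omega = w0 * det  (w0 <> 0;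
   every volume form on K^m is of this shape).  A decomposable k-vector
   v_1 /\ ... /\ v_k is represented by the sequence [:: v_1; ...; v_k]. *)

Definition vecs (K : fieldType) (m : nat) (v : nat -> 'rV[K]_m) (lo n : nat)
  : seq 'rV[K]_m := [seq v k | k <- iota lo n].

Definition rows (K : fieldType) (m k : nat) (s : seq 'rV[K]_m) : 'M[K]_(k, m) :=
  \matrix_(i < k, j < m) (nth 0 s i) 0 j.

Definition vol (K : fieldType) (m : nat) (w0 : K) (s : seq 'rV[K]_m) : K :=
  w0 * \det (rows m s).

(* For k-vectors X, Y with span X <= span Y and Y free:  the scalar lambda with
   X_1/\.../\X_k = lambda * Y_1/\.../\Y_k  (determinant of the change of
   coefficients X = P Y). *)
Definition wedge_ratio (K : fieldType) (m k : nat) (X Y : seq 'rV[K]_m) : K :=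
  \det (rows k X *m pinvmx (rows k Y)).

Definition wedge_eq (K : fieldType) (m k : nat) (X Y : seq 'rV[K]_m) : Prop :=
  [/\ size X = k, size Y = k, row_free (rows k Y),
      (rows k X <= rows k Y)%MS & wedge_ratio k X Y = 1].

Definition in_span (K : fieldType) (m k : nat) (v : 'rV[K]_m) (Y : seq 'rV[K]_m)
  : bool := (v <= rows k Y)%MS.

(* A decorated flag given by an adapted family u_1,...,u_(m-1):
   F_i = span(u_1..u_i), f_(i) = u_1 /\ ... /\ u_i  (1 <= i <= m-1). *)
Definition decorated_flag (K : fieldType) (m : nat) (u : nat -> 'rV[K]_m) : Prop :=
  row_free (rows m.-1 (vecs u 1 m.-1)).

(* The basis f_1..f_m attached to (F,G): f_k in F_k /\ G_(m+1-k),
   f_(k) = f_1/\../\f_k for all k (for k = m: <f_(m),omega> = 1). *)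
Definition FG_basis (K : fieldType) (m : nat) (w0 : K)
    (u g f : nat -> 'rV[K]_m) : Prop :=
  [/\ row_free (rows m (vecs f 1 m)),
      (forall k, (1 <= k < m)%N -> in_span k (f k) (vecs u 1 k)),
      (forall k, (1 <= k <= m)%N -> in_span (m + 1 - k) (f k) (vecs g 1 (m + 1 - k))),
      (forall k, (1 <= k < m)%N -> wedge_eq k (vecs f 1 k) (vecs u 1 k))
    & vol w0 (vecs f 1 m) = 1].

(* The basis h_1..h_m attached to (G,H): h_k in G_(m+1-k) /\ H_k,
   h_(k) = h_k/\h_(k-1)/\../\h_1 for all k (for k = m: <h_(m),omega> = 1). *)
Definition GH_basis (K : fieldType) (m : nat) (w0 : K)
    (g w h : nat -> 'rV[K]_m) : Prop :=
  [/\ row_free (rows m (vecs h 1 m)),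
      (forall k, (1 <= k < m)%N -> in_span k (h k) (vecs w 1 k)),
      (forall k, (1 <= k <= m)%N -> in_span (m + 1 - k) (h k) (vecs g 1 (m + 1 - k))),
      (forall k, (1 <= k < m)%N -> wedge_eq k (rev (vecs h 1 k)) (vecs w 1 k))
    & vol w0 (rev (vecs h 1 m)) = 1].

(* Delta^s_{a,b,c} = < f_{s,(a)} /\ g_(b) /\ h_{(c),s} , omega_s >, where
   omega_s is the volume form on G_(m-s) with
   <g_(m-s), omega_s> = <f_(s)/\g_(m-s), omega> <g_(m-s)/\h_(s), omega>;
   the (m-s)-vector X = f_{s,(a)}/\g_(b)/\h_{(c),s} lies in /\^(m-s) G_(m-s),
   so X = lambda g_(m-s) and <X,omega_s> = lambda <g_(m-s),omega_s>. *)
Definition Delta (K : fieldType) (m : nat) (w0 : K) (f g h : nat -> 'rV[K]_m)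
    (s a b c : nat) : K :=
  let X := vecs f s.+1 a ++ vecs g 1 b ++ rev (vecs h s.+1 c) in
  let gms := vecs g 1 (m - s) in
  let omega_s_g := vol w0 (vecs f 1 s ++ gms) * vol w0 (gms ++ rev (vecs h 1 s)) in
  wedge_ratio (m - s) X gms * omega_s_g.

(* Main.v *)
Require Import Defs.
From HB Require Import structures.
From mathcomp Require Import all_boot all_order all_algebra all_fingroup.
From mathcomp Require Import zify ring.
Set Implicit Arguments. Unset Strict Implicit. Unset Printing Implicit Defensive.
Import GRing.Theory.
Local Open Scope ring_scope.

Section Gen.
Variables (K : fieldType) (m : nat).
Implicit Types (X Y Q R S T : seq 'rV[K]_m).

Definition br (S : seq 'rV[K]_m) := \det (rows m S).

Lemma rowsE k (X : seq 'rV[K]_m) i j : rows k X i j = (nth 0 X i) 0 j.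
Proof. by rewrite mxE. Qed.

Lemma row_rows k (X : seq 'rV[K]_m) i : row i (rows k X) = nth 0 X i.
Proof. by apply/rowP => j; rewrite mxE rowsE; congr (_ _ _); apply/val_inj; case: j; case: (0 : 'I_1) => -[]. Qed.

Lemma br_set S (i : 'I_m) v :
  br (set_nth 0 S i v) = \sum_j v 0 j * cofactor (rows m S) i j.
Proof.
rewrite /br (expand_det_row _ i); apply: eq_bigr => j _.
rewrite rowsE nth_set_nth /= eqxx; congr (_ * _).
rewrite /cofactor; congr (_ * \det _); apply/matrixP => k l.
rewrite !mxE nth_set_nth /=.
have -> : (lift i k == i :> nat) = false.
  by apply/negbTE; rewrite eq_sym; exact: (neq_lift i k).
by [].
Qed.

Lemma syl S T (p : 'I_m) z :
  br S * br (set_nth 0 T p z) =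
  \sum_(i < m) br (set_nth 0 S i z) * br (set_nth 0 T p (nth 0 S i)).
Proof.
set A := rows m S.
have hz : \det A *: z = (z *m \adj A) *m A by rewrite -mulmxA mul_adj_mx mul_mx_scalar.
rewrite br_set big_distrr /=.
transitivity (\sum_j ((\det A *: z) 0 j) * cofactor (rows m T) p j).
  by apply: eq_bigr => j _; rewrite mxE mulrA.
rewrite hz.
transitivity (\sum_j \sum_(i < m) ((z *m \adj A) 0 i * A i j) * cofactor (rows m T) p j).
  by apply: eq_bigr => j _; rewrite mxE big_distrl.
rewrite exchange_big /=; apply: eq_bigr => i _.
rewrite br_set br_set big_distrr /=.
have -> : (z *m \adj A) 0 i = \sum_j z 0 j * cofactor (rows m S) i j.
  by rewrite mxE; apply: eq_bigr => j _; rewrite mxE.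
by apply: eq_bigr => j _; rewrite -mulrA rowsE.
Qed.

Lemma nth_swap X Z (x y : 'rV[K]_m) (k : nat) : k <> size X -> k <> (size X).+1 ->
  nth 0 (X ++ x :: y :: Z) k = nth 0 (X ++ y :: x :: Z) k.
Proof.
move=> h1 h2; rewrite !nth_cat; case: ltnP => // H.
have {}H : (size X <= k)%N := H.
case E: (k - size X)%N => [|[|d]] //; exfalso; lia.
Qed.

Lemma br_swap X Z (x y : 'rV[K]_m) : ((size X).+1 < m)%N ->
  br (X ++ x :: y :: Z) = - br (X ++ y :: x :: Z).
Proof.
move=> hs.
have h1 : (size X < m)%N by lia.
pose i1 : 'I_m := Ordinal h1; pose i2 : 'I_m := Ordinal hs.
rewrite /br.
have -> : rows m (X ++ y :: x :: Z) = xrow i1 i2 (rows m (X ++ x :: y :: Z)).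
  apply/matrixP => k j; rewrite !mxE.
  case: tpermP => [->|->|/eqP n1 /eqP n2] /=.
  - by rewrite !nth_cat ltnn subnn /= ltnNge leqnSn /= subSn // subnn.
  - by rewrite !nth_cat ltnn subnn /= ltnNge leqnSn /= subSn // subnn.
  - rewrite nth_swap //.
    + by move=> E; move/eqP: n1; apply; apply/val_inj.
    + by move=> E; move/eqP: n2; apply; apply/val_inj.
rewrite xrowE det_mulmx /tperm_mx det_perm odd_tperm.
have -> : (i1 != i2) by rewrite -val_eqE /= ltn_eqF.
by rewrite expr1 mulN1r opprK.
Qed.

Lemma br_move X Y Z (x : 'rV[K]_m) : (size X + size Y < m)%N ->
  br (X ++ x :: Y ++ Z) = (-1) ^+ (size Y) * br (X ++ Y ++ x :: Z).
Proof.
elim: Y X => [|y Y IH] X hs /=; first by rewrite expr0 mul1r.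
move: hs => /= hs.
rewrite br_swap; last by lia.
rewrite -cat_rcons IH; last by rewrite size_rcons; lia.
by rewrite cat_rcons exprS mulN1r mulNr.
Qed.

Lemma br_dup Q R (x : 'rV[K]_m) : x \in Q ++ R -> size (Q ++ x :: R) = m ->
  br (Q ++ x :: R) = 0.
Proof.
move=> hx hs.
have h1 : (size Q < m)%N by move: hs; rewrite size_cat /=; lia.
have [j hj [hjn hnth]] : exists2 j, (j < m)%N & (j != size Q) /\ nth 0 (Q ++ x :: R) j = x.
  move: hx; rewrite mem_cat => /orP [hq|hr].
    have hi : (index x Q < size Q)%N by rewrite index_mem.
    exists (index x Q); first exact: ltn_trans hi h1.
    split; first by rewrite neq_ltn index_mem hq.
    by rewrite nth_cat index_mem hq nth_index.
  exists (size Q + (index x R).+1)%N.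
    by move: hs (index_mem x R); rewrite hr size_cat /=; lia.
  split; first by apply/eqP; lia.
  rewrite nth_cat ltnNge leq_addr /= addKn /=; exact: nth_index.
pose i1 : 'I_m := Ordinal h1; pose i2 : 'I_m := Ordinal hj.
apply: (@determinant_alternate _ _ _ i1 i2).
  by rewrite -val_eqE /= eq_sym.
move=> k; rewrite !rowsE /= hnth nth_cat ltnn subnn //.
Qed.
End Gen.

Lemma rows_cat (K : fieldType) (m s n : nat) (F X : seq 'rV[K]_m) :
  size F = s -> rows (s + n) (F ++ X) = col_mx (rows s F) (rows n X).
Proof.
move=> hF; apply/matrixP => i j; rewrite !mxE.
case: splitP => k hk; rewrite !mxE hk nth_cat hF.
  by rewrite ltn_ord.
by rewrite ltnNge leq_addr /= addKn.
Qed.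

Lemma factor (K : fieldType) (m s n : nat) (e : m = (s + n)%N) (w0 : K)
  (F X G : seq 'rV[K]_m) : size F = s ->
  (rows n X <= rows n G)%MS ->
  wedge_ratio n X G * vol w0 (F ++ G) = vol w0 (F ++ X).
Proof.
subst m => hF hXG.
rewrite /vol /wedge_ratio !rows_cat //.
set P := rows n X *m pinvmx (rows n G).
have hX : rows n X = P *m rows n G by rewrite mulmxKpV.
rewrite hX.
have -> : col_mx (rows s F) (P *m rows n G) =
   block_mx 1%:M 0 0 P *m col_mx (rows s F) (rows n G).
  by rewrite mul_block_col !mul1mx !mul0mx addr0 add0r.
by rewrite det_mulmx det_ublock det1 mul1r mulrCA.
Qed.

Ltac gsz := repeat match goal with |- context [@size ?T ?X] =>
  let n := fresh "n" in generalize (@size T X); intro n end; intros; lia.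

Section Pl.
Variables (K : fieldType) (m : nat).
Implicit Types (X Y Q R S T : seq 'rV[K]_m).

Lemma set_cat Q R (y v : 'rV[K]_m) : set_nth 0 (Q ++ y :: R) (size Q) v = Q ++ v :: R.
Proof. by elim: Q => //= q Q ->. Qed.

Lemma nth_cat2 Q R (y : 'rV[K]_m) : nth 0 (Q ++ y :: R) (size Q) = y.
Proof. by rewrite nth_cat ltnn subnn. Qed.

Lemma br_move0 X Y (x : 'rV[K]_m) : (size X + size Y < m)%N ->
  br (X ++ x :: Y) = (-1) ^+ (size Y) * br (X ++ Y ++ [:: x]).
Proof. by move=> h; rewrite -[Y in LHS]cats0 br_move. Qed.

Lemma plucker3 (Q0 Wg Wh : seq 'rV[K]_m) (f' g' h' h1 : 'rV[K]_m) :
  (size Q0 + size Wg + size Wh + 2 = m)%N ->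
  br (Q0 ++ Wg ++ g' :: Wh ++ [:: h1]) * br (Q0 ++ f' :: Wg ++ h' :: Wh)
  = br (Q0 ++ f' :: Wg ++ Wh ++ [:: h1]) * br (Q0 ++ Wg ++ g' :: h' :: Wh)
  + br (Q0 ++ Wg ++ h' :: Wh ++ [:: h1]) * br (Q0 ++ f' :: Wg ++ g' :: Wh).
Proof.
move=> hm.
have hp : (size Q0 < m)%N by move: hm; gsz.
pose p : 'I_m := Ordinal hp.
have eT v : set_nth 0 (Q0 ++ f' :: Wg ++ h' :: Wh) p v = Q0 ++ v :: Wg ++ h' :: Wh.
  exact: set_cat.
have hi0 : (size (Q0 ++ Wg) < m)%N by rewrite size_cat; move: hm; gsz.
pose i0 : 'I_m := Ordinal hi0.
have hi1 : (size (Q0 ++ Wg ++ g' :: Wh) < m)%N by rewrite !size_cat /=; move: hm; gsz.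
pose i1 : 'I_m := Ordinal hi1.
have eS : Q0 ++ Wg ++ g' :: Wh ++ [:: h1] = (Q0 ++ Wg) ++ g' :: (Wh ++ [:: h1]).
  by rewrite -catA.
have eS1 : Q0 ++ Wg ++ g' :: Wh ++ [:: h1] = (Q0 ++ Wg ++ g' :: Wh) ++ h1 :: [::].
  by rewrite -!catA.
rewrite -[X in br _ * br X = _](eT f') syl (bigD1 i0) //=.
have n10 : i1 != i0 by rewrite -val_eqE /= !size_cat /= neq_ltn; apply/orP; right; gsz.
rewrite (bigD1 i1) //= big1 ?addr0; last first.
  move=> i /andP [n0 n1]; rewrite eT br_dup ?mulr0 //; last first.
    by rewrite /= !size_cat /= size_cat /=; move: hm; gsz.
  rewrite eS nth_cat.
  case: ltnP => hlt.
    have := mem_nth 0 hlt; rewrite !mem_cat => /orP [->|->] //; by rewrite orbT.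
  case E: (i - size (Q0 ++ Wg))%N => [|d] /=.
    by exfalso; move/eqP: n0; apply; apply/val_inj => /=; move: hlt E; rewrite size_cat; gsz.
  have hd : (d < size Wh)%N.
    move/eqP: n1 => n1.
    have : (i : nat) <> size (Q0 ++ Wg ++ g' :: Wh).
      by move=> E'; apply: n1; apply/val_inj.
    move: hm hlt E (ltn_ord i); rewrite !size_cat /=; gsz.
  rewrite nth_cat hd !mem_cat in_cons.
  have -> := mem_nth 0 hd.
  by rewrite !orbT.
rewrite [X in br (set_nth 0 X i0 _)]eS [X in nth 0 X i0]eS.
rewrite [X in br (set_nth 0 X i1 _)]eS1 [X in nth 0 X i1]eS1.
rewrite /= !set_cat !nth_cat2.
rewrite (@br_move _ _ Q0 Wg (h' :: Wh) g'); last by move: hm; gsz.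
rewrite (@br_move _ _ Q0 Wg (Wh ++ [:: h1]) f'); last by move: hm; gsz.
rewrite (@br_move0 Q0 (Wg ++ h' :: Wh) h1); last by rewrite size_cat /=; move: hm; gsz.
rewrite (@br_move0 Q0 (Wg ++ g' :: Wh) f'); last by rewrite size_cat /=; move: hm; gsz.
rewrite !size_cat /= -!catA /=.
ring.
Qed.
End Pl.

Lemma plucker_vol (K : fieldType) (m : nat) (w0 A B : K) (Q0 Wg Wh : seq 'rV[K]_m) (f' g' h' h1 : 'rV[K]_m) :
  (size Q0 + size Wg + size Wh + 2 = m)%N ->
  vol w0 (Q0 ++ Wg ++ g' :: Wh ++ [:: h1]) * A * (vol w0 (Q0 ++ f' :: Wg ++ h' :: Wh) * B)
  = vol w0 (Q0 ++ f' :: Wg ++ Wh ++ [:: h1]) * A * (vol w0 (Q0 ++ Wg ++ g' :: h' :: Wh) * B)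
  + vol w0 (Q0 ++ Wg ++ h' :: Wh ++ [:: h1]) * A * (vol w0 (Q0 ++ f' :: Wg ++ g' :: Wh) * B).
Proof.
move=> hs; have key := plucker3 f' g' h' h1 hs.
have vE S : vol w0 S = w0 * br S by [].
rewrite !vE; move: key.
generalize (br (Q0 ++ Wg ++ g' :: Wh ++ [:: h1])) (br (Q0 ++ f' :: Wg ++ h' :: Wh))
  (br (Q0 ++ f' :: Wg ++ Wh ++ [:: h1])) (br (Q0 ++ Wg ++ g' :: h' :: Wh))
  (br (Q0 ++ Wg ++ h' :: Wh ++ [:: h1])) (br (Q0 ++ f' :: Wg ++ g' :: Wh)).
move=> d1 d2 d3 d4 d5 d6 key.
have -> : w0 * d1 * A * (w0 * d2 * B) = w0 * w0 * A * B * (d1 * d2) by ring.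
rewrite key; ring.
Qed.

Section Vecs.
Variables (K : fieldType) (m : nat).

Lemma vecs_cat (u : nat -> 'rV[K]_m) lo n1 n2 :
  vecs u lo (n1 + n2) = vecs u lo n1 ++ vecs u (lo + n1) n2.
Proof. by rewrite /vecs iotaD map_cat. Qed.

Lemma vecsS (u : nat -> 'rV[K]_m) lo n : vecs u lo n.+1 = u lo :: vecs u lo.+1 n.
Proof. by []. Qed.

Lemma vecs_rcons (u : nat -> 'rV[K]_m) lo n :
  vecs u lo n.+1 = vecs u lo n ++ [:: u (lo + n)%N].
Proof. by rewrite -[n.+1]addn1 vecs_cat. Qed.

Lemma vecs_rcons1 (u : nat -> 'rV[K]_m) n :
  vecs u 1 n.+1 = vecs u 1 n ++ [:: u n.+1].
Proof. by rewrite vecs_rcons add1n. Qed.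

Lemma size_vecs (u : nat -> 'rV[K]_m) lo n : size (vecs u lo n) = n.
Proof. by rewrite size_map size_iota. Qed.

Lemma nth_vecs (u : nat -> 'rV[K]_m) lo n i : (i < n)%N ->
  nth 0 (vecs u lo n) i = u (lo + i)%N.
Proof. by move=> hi; rewrite (nth_map 0%N) ?size_iota // nth_iota. Qed.

Lemma mem_vecs (u : nat -> 'rV[K]_m) lo n v : v \in vecs u lo n ->
  exists2 k, (lo <= k < lo + n)%N & v = u k.
Proof. by move=> /mapP [k]; rewrite mem_iota => hk ->; exists k. Qed.

Lemma subG (g : nat -> 'rV[K]_m) j n : (j <= n)%N ->
  (rows j (vecs g 1 j) <= rows n (vecs g 1 n))%MS.
Proof.
move=> hjn; apply/row_subP => i; rewrite row_rows.
have hi : (i < n)%N by apply: leq_trans (ltn_ord i) hjn.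
rewrite nth_vecs // -(nth_vecs g 1 hi) -(@row_rows _ _ n (vecs g 1 n) (Ordinal hi)).
exact: row_sub.
Qed.

Lemma g_in (g : nat -> 'rV[K]_m) n k : (1 <= k <= n)%N ->
  (g k <= rows n (vecs g 1 n))%MS.
Proof.
move=> /andP [h1 h2].
have hi : (k.-1 < n)%N by rewrite prednK.
have -> : g k = row (Ordinal hi) (rows n (vecs g 1 n)).
  by rewrite row_rows nth_vecs // add1n prednK.
exact: row_sub.
Qed.

Lemma rows_sub k n (X G : seq 'rV[K]_m) :
  (forall v, v \in X -> (v <= rows n G)%MS) -> (rows k X <= rows n G)%MS.
Proof.
move=> hX; apply/row_subP => i; rewrite row_rows.
case: (ltnP i (size X)) => hi; first by apply: hX; exact: mem_nth.
by rewrite nth_default // sub0mx.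
Qed.
End Vecs.

Lemma DeltaE (K : fieldType) (m : nat) (w0 : K) (f g h : nat -> 'rV[K]_m) s a b c :
  (a + b + c = m - s)%N -> (s <= m)%N ->
  (forall v, v \in vecs f s.+1 a ++ vecs g 1 b ++ rev (vecs h s.+1 c) ->
      (v <= rows (m - s) (vecs g 1 (m - s)))%MS) ->
  Delta w0 f g h s a b c =
  vol w0 (vecs f 1 s ++ (vecs f s.+1 a ++ vecs g 1 b ++ rev (vecs h s.+1 c))) *
  vol w0 (vecs g 1 (m - s) ++ rev (vecs h 1 s)).
Proof.
move=> habc hsm hX.
rewrite /Delta mulrA (@factor K m s (m - s)) //.
- by rewrite subnKC.
- by rewrite size_vecs.
- exact: rows_sub.
Qed.

Unset Implicit Arguments.
Theorem mainTheorem14 (K : fieldType) (m : nat) (w0 : K) (hw0 : w0 != 0)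
    (u g w : nat -> 'rV[K]_m)
    (hF : decorated_flag u) (hG : decorated_flag g)
    (hgm : vol w0 (vecs g 1 m) = 1) (hH : decorated_flag w)
    (f h : nat -> 'rV[K]_m)
    (hf : FG_basis w0 u g f) (hh : GH_basis w0 g w h)
    (a b c s : nat) (habc : (a + b + c = m - s)%N)
    (ha : (0 < a)%N) (hb : (0 < b)%N) (hc : (0 < c)%N) :
  Delta w0 f g h s a b c * Delta w0 f g h s.+1 a b.-1 c =
    Delta w0 f g h s a.+1 b.-1 c * Delta w0 f g h s.+1 a.-1 b c
  + Delta w0 f g h s a b.-1 c.+1 * Delta w0 f g h s.+1 a b c.-1.
Proof.
have hfs : forall s' k, (s' < k <= m)%N -> (f k <= rows (m - s') (vecs g 1 (m - s')))%MS.
  move=> s' k /andP [h1 h2]; case: hf => _ _ hfg _ _.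
  apply: submx_trans (hfg k _) (subG _ _); first by apply/andP; split => //; lia.
  lia.
have hhs : forall s' k, (s' < k <= m)%N -> (h k <= rows (m - s') (vecs g 1 (m - s')))%MS.
  move=> s' k /andP [h1 h2]; case: hh => _ _ hhg _ _.
  apply: submx_trans (hhg k _) (subG _ _); first by apply/andP; split => //; lia.
  lia.
have XinG : forall s' a b c, (a + b + c = m - s')%N ->
    forall v, v \in vecs f s'.+1 a ++ vecs g 1 b ++ rev (vecs h s'.+1 c) ->
      (v <= rows (m - s') (vecs g 1 (m - s')))%MS.
  move=> s' a0 b0 c0 e v; rewrite !mem_cat mem_rev => /or3P [|| ] /mem_vecs [k hk ->].
  - by apply: hfs; lia.
  - by apply: g_in; lia.
  - by apply: hhs; lia.
case: a ha habc => [//|a'] _; case: b hb => [//|b'] _; case: c hc => [//|c'] _ habc.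
rewrite !DeltaE; try (apply: XinG); try lia.
rewrite ![_.+1.-1]/=.
set Qs := vol w0 (vecs g 1 (m - s) ++ rev (vecs h 1 s)).
set Qs1 := vol w0 (vecs g 1 (m - s.+1) ++ rev (vecs h 1 s.+1)).
rewrite (vecsS f s.+1 a'.+1) (vecsS f s.+1 a') (vecs_rcons f s.+2 a').
rewrite (vecs_rcons1 f s) (vecs_rcons1 g b').
rewrite (vecsS h s.+1 c'.+1) (vecsS h s.+1 c') (vecs_rcons h s.+2 c').
rewrite !rev_cons !rev_cat -!cats1 /= -!catA /=.
have := @plucker_vol K m w0 Qs Qs1
  (vecs f 1 s ++ f s.+1 :: vecs f s.+2 a') (vecs g 1 b') (rev (vecs h s.+2 c'))
  (f (s.+2 + a')%N) (g b'.+1) (h (s.+2 + c')%N) (h s.+1).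
rewrite -!catA /= => -> //.
rewrite size_cat /= !size_vecs size_rev size_vecs; lia.
Qed.
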